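(* Let $\mathfrak P$ be a prime ideal of $\mathcal O$ over $\mathfrak p$ and $n_\mathfrak P=\deg f_\mathfrak P$. Let $g_0=1,g_1,\dots,g_{n_\mathfrak P-1}\in A[x]$ be such that each $g_m$ is a divisor polynomial of degree $m$ of $f_\mathfrak P$ (e.g. the set ${\mathcal B}_\mathfrak P$ of the paper, built from an Okutsu frame). Then the family $\{g_0(\theta),g_1(\theta),\dots,g_{n_\mathfrak P-1}(\theta)\}\subset L$ is $w_\mathfrak P$-reduced.
   Context: Let $A$ be a Dedekind domain with fraction field $K$, $\mathfrak p$ a nonzero prime ideal of $A$ with discrete valuation $v_\mathfrak p$, $K_\mathfrak p$ the completion, $\hat A_\mathfrak p$ its valuation ring, $\hat v$ the extension of $v_\mathfrak p$ to $\overline K_\mathfrak p$. Let $f\in A[x]$ be monic irreducible separable, $\theta$ a root, $L=K(\theta)$, $\mathcal O$ the integral closure of $A$ in $L$. For a prime $\mathfrak P$ of $\mathcal O$ over $\mathfrak p$ with ramification index $e=e(\mathfrak P/\mathfrak p)$, let $v_\mathfrak P$ be its normalized discrete valuation on $L$ and $w_\mathfrak P:=v_\mathfrak P/e$; let $f_\mathfrak P$ be the corresponding monic irreducible factor of $f$ in $\hat A_\mathfrak p[x]$ and $\theta_\mathfrak P$ a root of it, so that $w_\mathfrak P(g(\theta))=\hat v(g(\theta_\mathfrak P))$ for $g\in A[x]$. For $g=\sum c_kx^k\in K_\mathfrak p[x]$, $v_0(g)=\min_k v_\mathfrak p(c_k)$. A divisor polynomial of degree $m$ ($0\le m<\deg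 f_\mathfrak P$) of $f_\mathfrak P$ is a monic $g_m\in\hat A_\mathfrak p[x]$ of degree $m$ with $\hat v(g_m(\theta_\mathfrak P))\ge\hat v(g(\theta_\mathfrak P))-v_0(g)$ for all $g\in\hat A_\mathfrak p[x]$ of degree $m$. A finite family ${\mathcal B}$ of elements of $L$ is $w$-reduced (for a map $w:L\to\mathbb Q\cup\{\infty\}$) if $w(\sum_{b\in{\mathcal B}}\lambda_b b)=\min_{b}w(\lambda_b b)$ for all $\lambda_b\in K$. *)

(* Defs.v *)
From HB Require Import structures.
From mathcomp Require Import all_boot all_order all_algebra all_field.
Set Implicit Arguments. Unset Strict Implicit. Unset Printing Implicit Defensive.
Import Order.TTheory GRing.Theory Num.Theory.
Local Open Scope ring_scope.

(* ---------- Valuation values: Q ∪ {∞}, with None = ∞ ---------- *)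
Definition vval := option rat.

Definition vle (x y : vval) : bool :=
  match x, y with
  | _, None => true
  | None, Some _ => false
  | Some a, Some b => a <= b
  end.
Definition vlt (x y : vval) : bool := vle x y && (x != y).
Definition vadd (x y : vval) : vval :=
  match x, y with Some a, Some b => Some (a + b) | _, _ => None end.
(* x - y, only meaningful for finite y *)
Definition vsub (x y : vval) : vval :=
  match x, y with Some a, Some b => Some (a - b) | _, _ => None end.
Definition vmin (x y : vval) : vval :=
  match x, y with
  | Some a, Some b => Some (Num.min a b)
  | None, y => y
  | x, None => x
  end.
Definition vint (z : int) : vval := Some (z%:~R).

Definition is_valuation (F : fieldType) (v : F -> vval) : Prop :=
  [/\ forall x, v x = None <-> x = 0,
      forall x y, v (x * y) = vadd (v x) (v y) &
      forall x y, vle (vmin (v x) (v y)) (v (x + y))].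

Definition is_normalized_discrete_valuation (F : fieldType) (v : F -> vval) : Prop :=
  [/\ is_valuation v,
      forall x, x <> 0 -> exists z : int, v x = vint z &
      exists x, v x = vint 1].

Section CommAlg.
Variable K : fieldType.

Definition is_subring (A : K -> Prop) : Prop :=
  [/\ A 1, forall x y, A x -> A y -> A (x - y) & forall x y, A x -> A y -> A (x * y)].

Definition is_ideal (A I : K -> Prop) : Prop :=
  [/\ forall x, I x -> A x, I 0, forall x y, I x -> I y -> I (x - y) &
      forall a x, A a -> I x -> I (a * x)].

Definition is_prime_ideal (A I : K -> Prop) : Prop :=
  [/\ is_ideal A I, ~ I 1 &
      forall a b, A a -> A b -> I (a * b) -> I a \/ I b].

Definition is_maximal_ideal (A I : K -> Prop) : Prop :=
  [/\ is_ideal A I, ~ I 1 &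
      forall J, is_ideal A J -> (forall x, I x -> J x) ->
        (forall x, J x <-> I x) \/ J 1].

Definition is_noetherian (A : K -> Prop) : Prop :=
  forall I, is_ideal A I ->
    exists s : seq K, (forall i, (i < size s)%N -> I s`_i) /\
      forall x, I x -> exists a : nat -> K, (forall i, A (a i)) /\
        x = \sum_(i < size s) a i * s`_i.

Definition is_integrally_closed_in (A : K -> Prop) : Prop :=
  forall x, (exists q : {poly K}, [/\ q \is monic, forall i, A q`_i & root q x]) -> A x.

Definition has_fraction_field (A : K -> Prop) : Prop :=
  forall x, exists a b, [/\ A a, A b, b != 0 & x = a / b].

Definition is_dedekind_with_fraction_field (A : K -> Prop) : Prop :=
  [/\ is_subring A, has_fraction_field A, is_noetherian A,
      is_integrally_closed_in A &
      forall P, is_prime_ideal A P -> (exists x, P x /\ x <> 0) -> is_maximal_ideal A P].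

Definition is_p_adic_valuation (A p : K -> Prop) (vp : K -> vval) : Prop :=
  [/\ is_normalized_discrete_valuation vp,
      forall a, A a -> vle (Some 0) (vp a) &
      forall a, A a -> (p a <-> vlt (Some 0) (vp a))].
End CommAlg.

Definition vcauchy (F : fieldType) (v : F -> vval) (s : nat -> F) : Prop :=
  forall N : int, exists n0, forall m n, (n0 <= m)%N -> (n0 <= n)%N -> vle (vint N) (v (s m - s n)).
Definition vconverges (F : fieldType) (v : F -> vval) (s : nat -> F) (l : F) : Prop :=
  forall N : int, exists n0, forall n, (n0 <= n)%N -> vle (vint N) (v (s n - l)).

Definition is_completion (K Kp : fieldType) (vp : K -> vval)
    (iota : {rmorphism K -> Kp}) (vKp : Kp -> vval) : Prop :=
  [/\ is_valuation vKp,
      forall x, vKp (iota x) = vp x,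
      forall s, vcauchy vKp s -> exists l, vconverges vKp s l &
      forall x (N : int), exists y, vle (vint N) (vKp (x - iota y))].

Definition is_valued_algebraic_closure (Kp : fieldType) (Om : closedFieldType)
    (vKp : Kp -> vval) (j : {rmorphism Kp -> Om}) (vh : Om -> vval) : Prop :=
  [/\ forall z : Om, exists q : {poly Kp}, q != 0 /\ root (map_poly j q) z,
      is_valuation vh &
      forall x, vh (j x) = vKp x].

Definition in_val_ring (F : fieldType) (v : F -> vval) (x : F) : bool := vle (Some 0) (v x).

Definition v0 (F : fieldType) (v : F -> vval) (g : {poly F}) : vval :=
  \big[vmin/None]_(i < size g) v g`_i.

Definition divisor_polynomial (Kp : fieldType) (Om : closedFieldType) (vKp : Kp -> vval)
    (j : {rmorphism Kp -> Om}) (vh : Om -> vval) (fP : {poly Kp}) (thP : Om)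
    (m : nat) (gm : {poly Kp}) : Prop :=
  [/\ (m < (size fP).-1)%N, gm \is monic, size gm = m.+1,
      forall i, in_val_ring vKp gm`_i &
      forall g : {poly Kp}, (forall i, in_val_ring vKp g`_i) -> size g = m.+1 ->
        vle (vsub (vh (map_poly j g).[thP]) (v0 vKp g)) (vh (map_poly j gm).[thP])].

Definition w_reduced (K : fieldType) (L : fieldExtType K) (w : L -> vval)
    (n : nat) (b : nat -> L) : Prop :=
  forall lam : nat -> K,
    w (\sum_(m < n) lam m *: b m) = \big[vmin/None]_(m < n) w (lam m *: b m).

(* Main.v *)
Require Import Defs.
From HB Require Import structures.
From mathcomp Require Import all_boot all_order all_algebra all_field.
From mathcomp Require Import lra.

Set Implicit Arguments. Unset Strict Implicit. Unset Printing Implicit Defensive.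
Import Order.TTheory GRing.Theory Num.Theory.
Local Open Scope ring_scope.

Lemma vminA : associative vmin.
Proof. by case=> [a|]; case=> [b|]; case=> [c|] //=; rewrite minA. Qed.
Lemma vminC : commutative vmin.
Proof. by case=> [a|]; case=> [b|] //=; rewrite minC. Qed.
Lemma vmin1 : left_id None vmin. Proof. by case. Qed.
Lemma vmin1r : right_id None vmin. Proof. by case. Qed.
HB.instance Definition _ := Monoid.isComLaw.Build vval None vmin vminA vminC vmin1.
Lemma vle_refl x : vle x x.
Proof. by case: x => //= a. Qed.
Lemma vle_trans x y z : vle x y -> vle y z -> vle x z.
Proof. case: x; case: y; case: z => //= a b c; exact: le_trans. Qed.
Lemma vle_total x y : vle x y || vle y x.
Proof. case: x; case: y => //= a b; exact: le_total. Qed.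
Lemma vle_anti x y : vle x y -> vle y x -> x = y.
Proof. case: x => [a|]; case: y => [b|] //= h1 h2. by rewrite (@le_anti _ _ a b) // h1 h2. Qed.
Lemma vmin_l x y : vle (vmin x y) x.
Proof. case: x; case: y => //= a b; rewrite ?ge_min ?lexx //. Qed.
Lemma vmin_r x y : vle (vmin x y) y.
Proof. case: x; case: y => //= a b; rewrite ?ge_min ?lexx ?orbT //. Qed.
Lemma vmin_eql x y : vle x y -> vmin x y = x.
Proof. case: x; case: y => //= a b h; congr Some; exact: min_l. Qed.
Lemma vmin_eqr x y : vle y x -> vmin x y = y.
Proof. case: x; case: y => //= a b h; congr Some; exact: min_r. Qed.

Lemma val0 (F : fieldType) (v : F -> vval) : is_valuation v -> v 0 = None.
Proof. by case=> h _ _; apply/h. Qed.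
Lemma valNone (F : fieldType) (v : F -> vval) x : is_valuation v -> x != 0 -> exists a, v x = Some a.
Proof. case=> h _ _ nx; case e: (v x) => [a|]; first by exists a.
by move/h: e => e; rewrite e eqxx in nx. Qed.
Lemma valM (F : fieldType) (v : F -> vval) x y : is_valuation v -> v (x * y) = vadd (v x) (v y).
Proof. by case. Qed.
Lemma valD (F : fieldType) (v : F -> vval) x y : is_valuation v -> vle (vmin (v x) (v y)) (v (x + y)).
Proof. by case. Qed.
Lemma val1 (F : fieldType) (v : F -> vval) : is_valuation v -> v 1 = Some 0.
Proof. move=> hv; have [a ea] := valNone hv (@oner_neq0 F).
have := valM 1 1 hv; rewrite mulr1 ea /= => [[]] h; congr Some; lra. Qed.
Lemma valN1 (F : fieldType) (v : F -> vval) : is_valuation v -> v (-1) = Some 0.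
Proof. move=> hv; have n1 : -1 != 0 :> F by rewrite oppr_eq0 oner_eq0.
have [a ea] := valNone hv n1.
have := valM (-1) (-1) hv; rewrite mulrNN mulr1 ea val1 //= => [[]] h; congr Some; lra. Qed.
Lemma valN (F : fieldType) (v : F -> vval) x : is_valuation v -> v (- x) = v x.
Proof. move=> hv; rewrite -mulN1r valM // (valN1 hv); by case: (v x) => //= a; rewrite add0r. Qed.
Lemma valDstrict (F : fieldType) (v : F -> vval) x y : is_valuation v ->
  vle (v x) (v y) -> v x != v y -> v (x + y) = v x.
Proof. move=> hv le ne; have h1 := valD x y hv; rewrite vmin_eql // in h1.
have h2 := valD (x + y) (- y) hv; rewrite addrK valN // in h2.
case/orP: (vle_total (v (x+y)) (v y)) => h.
- rewrite vmin_eql // in h2; exact: (vle_anti h2 h1).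
- rewrite vmin_eqr // in h2. have : v x = v y by exact: (vle_anti le h2).
  by move/eqP; rewrite (negbTE ne).
Qed.

Lemma vle_None x : vle x None.
Proof. by case: x. Qed.

Lemma bigmin_le N (F : nat -> vval) i : (i < N)%N ->
  vle (\big[vmin/None]_(l < N) F l) (F i).
Proof.
elim: N => [//|N IH] hi; rewrite big_ord_recr /=.
case: (ltngtP i N) => h.
- exact: vle_trans (vmin_l _ _) (IH h).
- by rewrite ltnS leqNgt h in hi.
- subst; exact: vmin_r.
Qed.

Lemma argmin_v N (F : nat -> vval) : exists i, (i <= N)%N /\ forall l, (l <= N)%N -> vle (F i) (F l).
Proof.
elim: N => [|N [i [hi IH]]].
- exists 0%N; split=> // l; rewrite leqn0 => /eqP ->; exact: vle_refl.
- case/orP: (vle_total (F i) (F N.+1)) => h.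
  + exists i; split; first exact: leqW.
    move=> l; rewrite leq_eqVlt => /orP[/eqP -> //| ]; rewrite ltnS; exact: IH.
  + exists N.+1; split=> // l; rewrite leq_eqVlt => /orP[/eqP -> | ]; first exact: vle_refl.
    rewrite ltnS => /IH; exact: vle_trans.
Qed.

Lemma vcancel q X Y : vadd (Some q) X = vadd (Some q) Y -> X = Y.
Proof. case: X => [x|]; case: Y => [y|] //= [] h; congr Some; lra. Qed.

Lemma varith X Y V0 (a b c : rat) : b + a = 0 -> a <= c -> vle V0 (Some 0) ->
  vle (vsub (vadd (Some b) X) V0) Y -> vle X (vadd (Some c) Y).
Proof.
case: X => [x|]; case: Y => [y|]; case: V0 => [z|] //=; rewrite ?vle_None //.
move=> h1 h2 h3 h4; lra.
Qed.

Lemma sub0 (K : fieldType) (A : K -> Prop) : is_subring A -> A 0.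
Proof. by case=> h1 h2 _; rewrite -(subrr 1); apply: h2. Qed.
Lemma subD (K : fieldType) (A : K -> Prop) x y : is_subring A -> A x -> A y -> A (x + y).
Proof. move=> hs hx hy; have [_ h2 _] := hs.
rewrite -[y]opprK -[x + - - y]/(x - - y); apply: (h2) => //.
rewrite -sub0r; apply: (h2) => //; exact: sub0. Qed.
Lemma subM (K : fieldType) (A : K -> Prop) x y : is_subring A -> A x -> A y -> A (x * y).
Proof. by case=> _ _ h; apply: h. Qed.

Lemma common_den (K : fieldType) (A : K -> Prop) (lam : nat -> K) n :
  is_subring A -> has_fraction_field A ->
  exists c, [/\ A c, c != 0 & forall m, (m < n)%N -> A (c * lam m)].
Proof.
move=> hs hf; elim: n => [|n [c [hc c0 hm]]].
- by exists 1; split=> //; [case: hs | rewrite oner_eq0].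
- have [a [b [ha hb b0 el]]] := hf (lam n).
  exists (c * b); split.
  + exact: subM.
  + by rewrite mulf_neq0.
  + move=> m; rewrite ltnS leq_eqVlt => /orP[/eqP -> | hmn].
    * rewrite el -mulrA (mulrC b) divfK //; exact: subM.
    * rewrite mulrAC; apply: subM => //; exact: hm.
Qed.
Theorem mainTheorem2
  (K : fieldType) (A p : K -> Prop) (vp : K -> vval)
  (hA : is_dedekind_with_fraction_field A)
  (hp : is_prime_ideal A p) (hp0 : exists x, p x /\ x <> 0)
  (hvp : is_p_adic_valuation A p vp)
  (Kp : fieldType) (iota : {rmorphism K -> Kp}) (vKp : Kp -> vval)
  (hKp : is_completion vp iota vKp)
  (Om : closedFieldType) (j : {rmorphism Kp -> Om}) (vh : Om -> vval)
  (hOm : is_valued_algebraic_closure vKp j vh)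
  (f : {poly K}) (hfA : forall i, A f`_i) (hfm : f \is monic)
  (hfirr : irreducible_poly f) (hfsep : separable_poly f)
  (L : fieldExtType K) (theta : L)
  (hroot : root (map_poly (in_alg L) f) theta) (hgen : <<1; theta>>%VS = fullv)
  (w : L -> vval) (hw : is_valuation w) (hwext : forall x : K, w (in_alg L x) = vp x)
  (fP : {poly Kp}) (hfPm : fP \is monic) (hfPA : forall i, in_val_ring vKp fP`_i)
  (hfPirr : irreducible_poly fP) (hfPdvd : fP %| map_poly iota f)
  (thP : Om) (hthP : root (map_poly j fP) thP)
  (hwP : forall g : {poly K}, (forall i, A g`_i) ->
     w (map_poly (in_alg L) g).[theta] = vh (map_poly j (map_poly iota g)).[thP])
  (g : nat -> {poly K}) (hg0 : g 0%N = 1)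
  (hg : forall m : nat, (m < (size fP).-1)%N ->
     (forall i, A (g m)`_i) /\ divisor_polynomial vKp j vh fP thP m (map_poly iota (g m))) :
  w_reduced w (size fP).-1 (fun m => (map_poly (in_alg L) (g m)).[theta]).
Proof.
Proof.
have [hsub hfrac _ _ _] := hA.
have [[hvpv _ _] _ _] := hvp.
have [hvKp hKiota _ _] := hKp.
have [_ hvh hjv] := hOm.
have vpNone : forall x, x != 0 -> exists q, vp x = Some q by move=> x; exact: valNone hvpv.
have EZ : forall (c : K) h, (map_poly (in_alg L) (c *: h)).[theta] = c *: (map_poly (in_alg L) h).[theta].
  by move=> c h; rewrite map_polyZ hornerZ mulr_algl.
have FZ : forall (c : K) h, (map_poly j (map_poly iota (c *: h))).[thP] = j (iota c) * (map_poly j (map_poly iota h)).[thP].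
  by move=> c h; rewrite !map_polyZ hornerZ.
have wZ : forall (c : K) x, w (c *: x) = vadd (vp c) (w x).
  by move=> c x; rewrite -mulr_algl valM // hwext.
have hwK : forall h : {poly K}, w (map_poly (in_alg L) h).[theta] = vh (map_poly j (map_poly iota h)).[thP].
  move=> h; have [c [hc c0 hcm]] := common_den (fun i => h`_i) (size h) hsub hfrac.
  have hA' : forall i, A (c *: h)`_i.
    move=> i; rewrite coefZ; case: (ltnP i (size h)) => hi; first exact: hcm.
    by rewrite nth_default // mulr0; exact: sub0.
  have := hwP _ hA'; rewrite EZ FZ wZ (valM _ _ hvh) hjv hKiota.
  have [q eq] := vpNone c c0; rewrite eq; exact: vcancel.
rewrite /w_reduced => lam /=.
set n := (size fP).-1.
have hsz : forall m, (m < n)%N -> size (g m) = m.+1.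
  by move=> m hm; have [_ [_ _ s _ _]] := hg m hm; rewrite size_map_poly in s.
have hmon : forall m, (m < n)%N -> (g m)`_m = 1.
  move=> m hm; have [_ [_ mo s _ _]] := hg m hm.
  move/monicP: mo; rewrite lead_coefE s /= coef_map => e.
  by apply: (fmorph_inj iota); rewrite e rmorph1.
have Elin : forall k, (map_poly (in_alg L) (\sum_(m < k) lam m *: g m)).[theta]
    = \sum_(m < k) lam m *: (map_poly (in_alg L) (g m)).[theta].
  elim=> [|k IH]; first by rewrite !big_ord0 map_poly0 horner0.
  by rewrite !big_ord_recr /= raddfD hornerD IH EZ.
suff: forall k, (k <= n)%N -> w (\sum_(m < k) lam m *: (map_poly (in_alg L) (g m)).[theta])
   = \big[vmin/None]_(m < k) w (lam m *: (map_poly (in_alg L) (g m)).[theta]).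
  by move=> /(_ n (leqnn n)).
elim=> [|k IH] hk; first by rewrite !big_ord0 (val0 hw).
have hkn : (k < n)%N := hk.
rewrite !big_ord_recr /= -IH ?(ltnW hk) //.
set S := \sum_(i < k) _. set t := lam k *: _.
have hkey : vle (w (S + t)) (w t).
  case: (eqVneq (lam k) 0) => lk0.
    by rewrite /t lk0 scale0r (val0 hw) vle_None.
  have [c ec] := vpNone _ lk0.
  pose H := \sum_(m < k.+1) lam m *: g m.
  have eH : S + t = (map_poly (in_alg L) H).[theta] by rewrite Elin big_ord_recr.
  have hgk := hwP _ (hg k hkn).1.
  rewrite eH hwK /t wZ hgk ec.
  have hHhi : forall l, (k < l)%N -> H`_l = 0.
    move=> l hl; rewrite coef_sum; apply: big1 => m _; rewrite coefZ nth_default ?mulr0 //.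
    rewrite hsz; last exact: leq_trans (ltn_ord m) hkn.
    exact: leq_trans (ltn_ord m) hl.
  have hHk : H`_k = lam k.
    rewrite coef_sum big_ord_recr /= big1 ?add0r.
      by rewrite coefZ hmon // mulr1.
    move=> m _; rewrite coefZ nth_default ?mulr0 //= hsz //.
    exact: ltn_trans (ltn_ord m) hkn.
  set G := map_poly iota H.
  have hGk : G`_k = iota (lam k) by rewrite coef_map hHk.
  have hGsz : size G = k.+1.
    rewrite size_map_poly; apply/eqP; rewrite eqn_leq; apply/andP; split.
      by apply/leq_sizeP => l hl; exact: hHhi.
    rewrite ltnNge; apply/negP => /leq_sizeP/(_ k (leqnn k)); rewrite hHk; exact/eqP.
  have [i [hi hmin]] := argmin_v k (fun l => vKp G`_l).
  have hmin' : forall l, vle (vKp G`_i) (vKp G`_l).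
    move=> l; case: (leqP l k) => hl; first exact: hmin.
    by rewrite [G`_l]coef_map hHhi // raddf0 (val0 hvKp) vle_None.
  have hGi0 : G`_i != 0.
    apply/eqP=> e; have := hmin' k; by rewrite e (val0 hvKp) hGk hKiota ec.
  pose d := (G`_i)^-1.
  have d0 : d != 0 by rewrite invr_eq0.
  have [a ea] := valNone hvKp hGi0.
  have [bb eb] := valNone hvKp d0.
  have eab : bb + a = 0.
    have := valM d G`_i hvKp; rewrite mulVf // (val1 hvKp) ea eb /=; by case=> ->.
  have [_ [_ _ _ _ hdiv]] := hg k hkn.
  have hint : forall l, in_val_ring vKp (d *: G)`_l.
    move=> l; rewrite /in_val_ring coefZ (valM _ _ hvKp) eb.
    have := hmin' l; rewrite ea; case: (vKp G`_l) => [cc|] //= hl; lra.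
  have hdsz : size (d *: G) = k.+1 by rewrite size_scale.
  have hv0 : vle (v0 vKp (d *: G)) (Some 0).
    rewrite /v0; apply: vle_trans (@bigmin_le (size (d *: G)) (fun l => vKp (d *: G)`_l) i _) _.
      by rewrite hdsz ltnS.
    by rewrite coefZ /d mulVf // (val1 hvKp) vle_refl.
  have := hdiv (d *: G) hint hdsz.
  rewrite map_polyZ hornerZ (valM _ _ hvh) hjv eb.
  apply: varith eab _ hv0.
  have := hmin' k; by rewrite ea hGk hKiota ec.
case: (boolP (vle (w t) (w S))) => h.
- rewrite vmin_eqr //; apply: vle_anti hkey _; by have := valD S t hw; rewrite vmin_eqr.
- have h' : vle (w S) (w t) by case/orP: (vle_total (w S) (w t)) => // h2; rewrite h2 in h.
  have ne : w S != w t by apply/eqP=> e; move: h; rewrite e vle_refl.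
  by rewrite vmin_eql // (valDstrict hw h' ne).
Qed.
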